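(* Let $Y$ be a real Banach space and $\varepsilon>0$. Define $f:B_Y\times B_Y\times B_{Y^*}\to\mathbb{R}$ by $$f(x,y,x^* )=\sup_{t\ge\varepsilon}\Big(1-\frac{\|x+ty\|}{|x^*(x)|+t}\Big).$$ If $\delta>0$, $x,\tilde x,y,\tilde y\in B_Y$ with $\|x-\tilde x\|\le\delta$, $\|y-\tilde y\|\le\delta$, and $x^*,\tilde x^*\in B_{Y^*}$ with $\|x^*-\tilde x^*\|\le\delta$, then $$|f(x,y,x^* )-f(\tilde x,\tilde y,\tilde x^* )|\le\delta\,(3/\varepsilon+2/\varepsilon^2+1).$$
   Context: $B_Y$ and $B_{Y^*}$ denote the closed unit balls of $Y$ and of its dual $Y^*$. *)

(* Defs.v *)
From HB Require Import structures.
From mathcomp Require Import all_boot all_order all_algebra.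
From mathcomp Require Import all_classical all_reals all_analysis.
Set Implicit Arguments. Unset Strict Implicit. Unset Printing Implicit Defensive.
Import Order.TTheory GRing.Theory Num.Theory.
Import numFieldNormedType.Exports.
Local Open Scope classical_set_scope.
Local Open Scope ring_scope.

Definition in_unit_ball (R : realType) (Y : normedModType R) (x : Y) : Prop :=
  `|x| <= 1.

(* ||phi|| <= c for a linear functional phi (operator norm), written out:
   |phi y| <= c ||y|| for all y. *)
Definition dual_norm_le (R : realType) (Y : normedModType R)
  (phi : Y -> R) (c : R) : Prop := forall y : Y, `|phi y| <= c * `|y|.

Definition in_dual_ball (R : realType) (Y : normedModType R)
  (xs : {scalar Y}) : Prop := continuous xs /\ dual_norm_le xs 1.

Definition fval (R : realType) (Y : normedModType R) (eps : R)
  (x y : Y) (xs : {scalar Y}) : R :=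
  sup [set (1 - `|x + t *: y| / (`|xs x| + t)) | t in [set t : R | eps <= t]].

(* Main.v *)
Require Import Defs.
From HB Require Import structures.
From mathcomp Require Import all_boot all_order all_algebra.
From mathcomp Require Import all_classical all_reals all_analysis.
From mathcomp Require Import ring lra.
Import Order.TTheory GRing.Theory Num.Theory.
Import numFieldNormedType.Exports.
Local Open Scope classical_set_scope.
Local Open Scope ring_scope.

Lemma sup_shift (R : realType) (g h : R -> R) (P : set R) (C : R) :
  P !=set0 -> (forall t, P t -> h t <= 1) ->
  (forall t, P t -> g t <= h t + C) -> sup (g @` P) <= sup (h @` P) + C.
Proof.
move=> [t0 Pt0] hle gle; apply: ge_sup.
  by exists (g t0), t0.
move=> z [t Pt <-].
apply: (le_trans (gle t Pt)); rewrite lerD2r.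
have ub : has_ubound (h @` P) by exists 1 => w [s Ps <-]; exact: hle.
by apply: (ub_le_sup ub); exists t.
Qed.

Lemma key (R : realType) (eps delta t a b N M : R) :
  0 < eps -> 0 < delta -> eps <= t -> 0 <= a -> 0 <= b ->
  `|a - b| <= 2 * delta -> `|N - M| <= delta * (1 + t) -> 0 <= M -> M <= 1 + t ->
  `|N / (a + t) - M / (b + t)| <= delta * (3 / eps + 2 / eps ^+ 2 + 1).
Proof.
move=> he hd het ha hb hab hNM hM0 hM1.
have ht : 0 < t by apply: lt_le_trans het.
have hat : 0 < a + t by lra.
have hbt : 0 < b + t by lra.
set p := (a + t)^-1; set q := (b + t)^-1; set u := t^-1; set e := eps^-1.
have hp : 0 < p by rewrite invr_gt0.
have hq : 0 < q by rewrite invr_gt0.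
have hpu : p <= u by rewrite lef_pV2 ?posrE //; lra.
have hqu : q <= u by rewrite lef_pV2 ?posrE //; lra.
have hue : u <= e by rewrite lef_pV2 ?posrE //.
have hu : 0 < u by rewrite invr_gt0.
have htu : t * u = 1 by rewrite mulfV // gt_eqF.
have hpq : p - q = p * q * (b - a).
  by rewrite /p /q; field; apply/andP; split; rewrite gt_eqF.
have -> : N / (a + t) - M / (b + t) = (N - M) * p + M * (p * q * (b - a)).
  by rewrite -hpq /p /q; ring.
have -> : 3 / eps + 2 / eps ^+ 2 + 1 = 3 * e + 2 * (e * e) + 1.
  by rewrite /e; field; rewrite gt_eqF.
apply: (le_trans (ler_normD _ _)).
rewrite !normrM (ger0_norm (ltW hp)) (ger0_norm hM0) (ger0_norm (ltW hq)).
have h1 : `|N - M| * p <= delta * (1 + t) * u.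
  apply: (le_trans (y := delta * (1 + t) * p)).
    by rewrite ler_wpM2r // ltW.
  by rewrite ler_wpM2l // mulr_ge0 //; lra.
have h2 : M * (p * q * `|b - a|) <= (1 + t) * (u * u * (2 * delta)).
  apply: ler_pM => //; first by rewrite !mulr_ge0 // ltW.
  apply: ler_pM => //; first by rewrite mulr_ge0 // ltW.
    by apply: ler_pM => //; apply: ltW.
  by rewrite distrC.
have h1' : delta * (1 + t) * u = delta * u + delta.
  have -> : delta * (1 + t) * u = delta * u + delta * (t * u) by ring.
  by rewrite htu mulr1.
have h2' : (1 + t) * (u * u * (2 * delta)) = 2 * delta * (u * u) + 2 * delta * u.
  have -> : (1 + t) * (u * u * (2 * delta)) = 2 * delta * (u * u) + 2 * delta * u * (t * u) by ring.
  by rewrite htu mulr1.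
have huu : u * u <= e * e by apply: ler_pM => //; apply: ltW.
have hde : delta * u <= delta * e by rewrite ler_pM2l.
have hde2 : 2 * delta * (u * u) <= 2 * delta * (e * e) by rewrite ler_pM2l //; lra.
have hde3 : 2 * delta * u <= 2 * delta * e by rewrite ler_pM2l //; lra.
lra.
Qed.

Theorem lemma2p1 (R : realType) (Y : completeNormedModType R) (eps delta : R)
  (x xt y yt : Y) (xs xst : {scalar Y}) :
  0 < eps -> 0 < delta ->
  in_unit_ball x -> in_unit_ball xt -> in_unit_ball y -> in_unit_ball yt ->
  in_dual_ball xs -> in_dual_ball xst ->
  `|x - xt| <= delta -> `|y - yt| <= delta ->
  dual_norm_le (fun z => xs z - xst z) delta ->
  `|fval eps x y xs - fval eps xt yt xst|
    <= delta * (3 / eps + 2 / eps ^+ 2 + 1).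
Proof.
move=> he hd hx hxt hy hyt [_ hxs] [_ hxst] dx dy dxs.
rewrite /in_unit_ball in hx hxt hy hyt.
set K := delta * (3 / eps + 2 / eps ^+ 2 + 1).
have hab : `| `|xs x| - `|xst xt| | <= 2 * delta.
  apply: (le_trans (ler_dist_dist _ _)).
  have -> : xs x - xst xt = xs (x - xt) + (xs xt - xst xt) by rewrite raddfB; ring.
  apply: (le_trans (ler_normD _ _)).
  have h1 := hxs (x - xt); have h2 := dxs xt; simpl in h2.
  have h3 : delta * `|xt| <= delta * 1 by rewrite ler_pM2l.
  lra.
pose g (t : R) := 1 - `|x + t *: y| / (`|xs x| + t).
pose h (t : R) := 1 - `|xt + t *: yt| / (`|xst xt| + t).
have P0 : [set t : R | eps <= t] !=set0 by exists eps => /=.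
have gh : forall t, eps <= t -> `|g t - h t| <= K.
  move=> t het.
  have ht : 0 < t by apply: lt_le_trans het.
  have -> : g t - h t = - (`|x + t *: y| / (`|xs x| + t) - `|xt + t *: yt| / (`|xst xt| + t)).
    by rewrite /g /h; ring.
  rewrite normrN; apply: key => //.
  - apply: (le_trans (ler_dist_dist _ _)).
    have -> : x + t *: y - (xt + t *: yt) = (x - xt) + t *: (y - yt).
      by rewrite scalerBr; rewrite addrACA opprD.
    apply: (le_trans (ler_normD _ _)); rewrite normrZ (gtr0_norm ht).
    have : t * `|y - yt| <= t * delta by rewrite ler_pM2l.
    lra.
  - apply: (le_trans (ler_normD _ _)); rewrite normrZ (gtr0_norm ht).
    have : t * `|yt| <= t * 1 by rewrite ler_pM2l.
    lra.
have g1 : forall t, eps <= t -> g t <= 1.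
  move=> t het; have ht : 0 < t by apply: lt_le_trans het.
  rewrite /g lerBlDr lerDl divr_ge0 //; have := normr_ge0 (xs x); lra.
have h1 : forall t, eps <= t -> h t <= 1.
  move=> t het; have ht : 0 < t by apply: lt_le_trans het.
  rewrite /h lerBlDr lerDl divr_ge0 //; have := normr_ge0 (xst xt); lra.
have A := @sup_shift _ g h _ K P0 h1.
have B := @sup_shift _ h g _ K P0 g1.
rewrite /fval -/(g @` _) -/(h @` _).
have A' := A (fun t Pt => ltac:(move: (gh t Pt); rewrite ler_norml; lra)).
have B' := B (fun t Pt => ltac:(move: (gh t Pt); rewrite ler_norml; lra)).
rewrite ler_norml; lra.
Qed.
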